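(* Let $\Lambda$ be a left cancellative small category. The core $\Lambda_c$ is a subcategory of $\Lambda$ containing all invertible elements. Furthermore: (1) if $\alpha\beta\in\Lambda_c$ (with $s(\alpha)=r(\beta)$), then $\alpha,\beta\in\Lambda_c$; (2) if $\alpha,\beta\in\Lambda_c$ with $r(\alpha)=r(\beta)$ and $\alpha\Lambda\cap\beta\Lambda=\bigcup_{i=1}^n\alpha_i\Lambda$ for $\alpha_i\in\Lambda$, then $\{\alpha_i\}_{i=1}^n$ is exhaustive (at $r(\alpha)$); (3) if $\Lambda$ is singly aligned, $\alpha,\beta\in\Lambda_c$ with $r(\alpha)=r(\beta)$, and $\alpha\Lambda\cap\beta\Lambda=\gamma\Lambda$, then $\gamma\in\Lambda_c$.
   Context: $\Lambda$ is a small category with objects $\Lambda^0$, range $r$ and source $s$; $\alpha\Lambda=\{\alpha\beta:s(\alpha)=r(\beta)\}$; $u$ is invertible if $uv=r(u)$ for some $v$. The core is $\Lambda_c=\{\alpha\in\Lambda:\alpha\Lambda\cap\beta\Lambda\neq\emptyset\text{ for all }\beta\in r(\alpha)\Lambda\}$. For $x\in\Lambda^0$, $B\subseteq x\Lambda$ is exhaustive (at $x$) if for every $\alpha\in x\Lambda$ there is $\beta\in B$ with $\alpha\Lambda\cap\beta\Lambda\neq\emptyset$. $\Lambda$ is singly aligned if every $\alpha\Lambda\cap\beta\Lambda$ is empty or of the form $\rho\Lambda$. *)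

(* Defs.v *)
From Stdlib Require Import List.

Record SmallCat := {
  Obj : Type;
  Mor : Type;
  rng : Mor -> Obj;
  src : Mor -> Obj;
  idm : Obj -> Mor;
  comp : Mor -> Mor -> Mor;  (* comp a b = "a b", meaningful when src a = rng b *)
  rng_idm : forall x, rng (idm x) = x;
  src_idm : forall x, src (idm x) = x;
  rng_comp : forall a b, src a = rng b -> rng (comp a b) = rng a;
  src_comp : forall a b, src a = rng b -> src (comp a b) = src b;
  comp_idl : forall a, comp (idm (rng a)) a = a;
  comp_idr : forall a, comp a (idm (src a)) = a;
  comp_assoc : forall a b c, src a = rng b -> src b = rng c ->
     comp (comp a b) c = comp a (comp b c)
}.

Arguments rng {_} _.
Arguments src {_} _.
Arguments idm {_} _.
Arguments comp {_} _ _.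

Definition left_cancellative (C : SmallCat) : Prop :=
  forall a b c : Mor C, src a = rng b -> src a = rng c ->
    comp a b = comp a c -> b = c.

(* alpha Lambda = { alpha beta : s(alpha) = r(beta) } *)
Definition rset {C : SmallCat} (a : Mor C) : Mor C -> Prop :=
  fun m => exists b, src a = rng b /\ m = comp a b.

Definition meets {C : SmallCat} (a b : Mor C) : Prop :=
  exists m, rset a m /\ rset b m.

Definition invertible {C : SmallCat} (u : Mor C) : Prop :=
  exists v, src u = rng v /\ comp u v = idm (rng u).

Definition core {C : SmallCat} (a : Mor C) : Prop :=
  forall b : Mor C, rng b = rng a -> meets a b.

Definition exhaustive {C : SmallCat} (x : Obj C) (B : Mor C -> Prop) : Prop :=
  (forall b, B b -> rng b = x) /\
  (forall a : Mor C, rng a = x -> exists b, B b /\ meets a b).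

Definition singly_aligned (C : SmallCat) : Prop :=
  forall a b : Mor C,
    (~ meets a b) \/
    (exists rho : Mor C, forall m, (rset a m /\ rset b m) <-> rset rho m).

(* Main.v *)
Require Import Defs.
From Stdlib Require Import List.

Section S.
Variable C : SmallCat.

Lemma rset_self (a : Mor C) : rset a a.
Proof. exists (idm (src a)). rewrite rng_idm, comp_idr. auto. Qed.

Lemma rset_rng (a m : Mor C) : rset a m -> rng m = rng a.
Proof. intros [x [H ->]]. apply rng_comp; auto. Qed.

Lemma rset_src (a x : Mor C) : src a = rng x -> src (comp a x) = src x.
Proof. intros H; apply src_comp; auto. Qed.

Lemma rset_ext (a m k : Mor C) : rset a m -> src m = rng k -> rset a (comp m k).
Proof.
  intros [x [H ->]] Hk. rewrite src_comp in Hk by auto.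
  exists (comp x k). split.
  - rewrite rng_comp by auto. auto.
  - rewrite comp_assoc; auto.
Qed.

Lemma rset_comp (a b : Mor C) : src a = rng b -> rset a (comp a b).
Proof. intros H; exists b; auto. Qed.

Lemma meets_sym (a b : Mor C) : meets a b -> meets b a.
Proof. intros [m [H1 H2]]; exists m; auto. Qed.

Lemma triple (a b c : Mor C) : core b -> rng a = rng b -> meets a c ->
  exists n, rset a n /\ rset b n /\ rset c n.
Proof.
  intros Hb Hab [m [Ha Hc]].
  assert (Hm : rng m = rng b) by (rewrite (rset_rng _ _ Ha); auto).
  destruct (Hb m Hm) as [n [Hbn Hmn]].
  destruct Hmn as [w [Hw ->]].
  exists (comp m w). repeat split; auto using rset_ext.
Qed.
End S.

Theorem lemma4p13 (C : SmallCat) (HC : left_cancellative C) :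
  (* the core is a subcategory containing all invertible elements *)
  ((forall x : Obj C, core (idm x)) /\
   (forall a b : Mor C, src a = rng b -> core a -> core b -> core (comp a b)) /\
   (forall u : Mor C, invertible u -> core u)) /\
  (* (1) *)
  (forall a b : Mor C, src a = rng b -> core (comp a b) -> core a /\ core b) /\
  (* (2) *)
  (forall (a b : Mor C) (alphas : list (Mor C)),
     core a -> core b -> rng a = rng b ->
     (forall m, (rset a m /\ rset b m) <-> exists ai, In ai alphas /\ rset ai m) ->
     exhaustive (rng a) (fun ai => In ai alphas)) /\
  (* (3) *)
  (singly_aligned C ->
   forall a b g : Mor C, core a -> core b -> rng a = rng b ->
     (forall m, (rset a m /\ rset b m) <-> rset g m) ->
     core g).
Proof.
  split; [split; [|split]|split; [|split]].
  - intros x c Hc. rewrite rng_idm in Hc. exists c. split.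
    + exists c. rewrite src_idm. split; auto. subst x. rewrite comp_idl. auto.
    + apply rset_self.
  - intros a b Hab Ha Hb c Hc.
    rewrite rng_comp in Hc by auto.
    destruct (Ha c Hc) as [m [[x [Hx ->]] Hcm]].
    assert (Hbx : rng x = rng b) by congruence.
    destruct (Hb x Hbx) as [n [[z [Hz ->]] [w [Hw Hn]]]].
    exists (comp (comp a x) w). split.
    + replace (comp (comp a x) w) with (comp (comp a b) z).
      * apply rset_comp. rewrite src_comp by auto. auto.
      * rewrite comp_assoc, comp_assoc, Hn; auto.
    + apply rset_ext; auto. rewrite src_comp by auto. auto.
  - intros u [v [Hv Huv]] c Hc. exists c. split; [|apply rset_self].
    assert (Hsv : src v = rng c).
    { rewrite <- (src_comp _ u v Hv), Huv, src_idm. auto. }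
    exists (comp v c). split.
    + rewrite rng_comp by auto. auto.
    + rewrite <- comp_assoc by auto. rewrite Huv, <- Hc, comp_idl. auto.
  - intros a b Hab Hc. split.
    + intros c Hrc. assert (H' : rng c = rng (comp a b)) by (rewrite rng_comp; auto).
      destruct (Hc c H') as [m [[x [Hx ->]] Hcm]].
      exists (comp (comp a b) x). split; auto.
      exists (comp b x). split.
      * rewrite rng_comp; auto. rewrite src_comp in Hx; auto.
      * apply comp_assoc; auto. rewrite src_comp in Hx; auto.
    + intros c Hrc.
      assert (H' : rng (comp a c) = rng (comp a b)) by (rewrite !rng_comp; congruence).
      destruct (Hc _ H') as [m [[x [Hx Hm]] [y [Hy Hm']]]].
      rewrite src_comp in Hx, Hy by congruence.
      rewrite Hm' in Hm. rewrite !comp_assoc in Hm by congruence.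
      apply HC in Hm.
      * exists (comp b x). split; [apply rset_comp; auto|].
        rewrite <- Hm. apply rset_comp; auto.
      * rewrite rng_comp; congruence.
      * rewrite rng_comp; congruence.
  - intros a b alphas Ha Hb Hab Heq. split.
    + intros ai Hin. assert (Hr : rset a ai /\ rset b ai).
      { apply Heq. exists ai. split; auto. apply rset_self. }
      apply rset_rng. apply Hr.
    + intros c Hc. destruct (Ha c Hc) as [m [H1 H2]].
      destruct (triple C a b c Hb Hab (ex_intro _ m (conj H1 H2))) as [n [Hna [Hnb Hnc]]].
      destruct (proj1 (Heq n) (conj Hna Hnb)) as [ai [Hin Hai]].
      exists ai. split; auto. exists n; auto.
  - intros _ a b g Ha Hb Hab Heq c Hc.
    assert (Hg : rng g = rng a).
    { apply rset_rng. apply (proj2 (Heq g)). apply rset_self. }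
    rewrite Hg in Hc.
    destruct (Ha c Hc) as [m [H1 H2]].
    destruct (triple C a b c Hb Hab (ex_intro _ m (conj H1 H2))) as [n [Hna [Hnb Hnc]]].
    exists n. split; auto. apply Heq; auto.
Qed.
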